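(* Let $G=(V,E)$ be a prime permutation graph, let $(<_1,<_2)$ be a realizer of $G$, and let $w$ be the first element of $<_1$. Then the relations $\vartriangleleft_1^w$ and $\vartriangleleft_2^w$ are strict linear orders on $V$.
   Context: Graphs are finite, simple, undirected, with nonempty vertex set. A module of $G$ is a nonempty $M\subseteq V$ such that every vertex outside $M$ is adjacent to all or none of $M$; $G$ is prime if its only modules are $V$ and the singletons. A realizer of $G$ is a pair $(<_1,<_2)$ of strict linear orders on $V$ such that distinct $u,v$ are adjacent iff they appear in different orders in $<_1$ and $<_2$; $G$ is a permutation graph if it has a realizer. For a pair of binary relations $(\lhd_1,\lhd_2)$ on $V$: its transitive closure is $(\lhd_1^T,\lhd_2^T)$ (componentwise transitive closures); its closure under $E$ is $(\lhd_1^E,\lhd_2^E)$ where, for $i\in[2]$, $\lhd_i^E=\lhd_i\cup\{(v,u)\mid u\lhd_{3-i}v,\ \{u,v\}\in E\}\cup\{(u,v)\mid u\lhd_{3-i}v,\ \{u,v\}\notin E\}$. For $w\in V$ define $\lhd_{1,0}^w=\{(w,v)\mid v\in V, v\ne w\}$, $\lhd_{2,0}^w=\emptyset$, and for $k\ge0$, $(\lhd_{1,k+1}^w,\lhd_{2,k+1}^w)=((\lhd_{1,k}^w,\lhd_{2,k}^w)^E)^T$. These increase with $k$; $\lhd_i^w$ denotes $\lhd_{i,m}^w$ for $m$ such that the sequence has stabilized. *)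

(* Defs.v *)
From mathcomp Require Import all_boot.
Set Implicit Arguments. Unset Strict Implicit. Unset Printing Implicit Defensive.

Definition simple_graph (T : finType) (e : rel T) : Prop :=
  symmetric e /\ irreflexive e.

Definition is_module (T : finType) (e : rel T) (M : {set T}) : Prop :=
  M != set0 /\
  forall x, x \notin M -> (forall m, m \in M -> e x m) \/ (forall m, m \in M -> ~~ e x m).

Definition prime_graph (T : finType) (e : rel T) : Prop :=
  forall M : {set T}, is_module e M -> M = setT \/ #|M| = 1.

Definition strict_linear_order (T : finType) (r : rel T) : Prop :=
  irreflexive r /\ transitive r /\ (forall x y, x != y -> r x y \/ r y x).

Definition realizer (T : finType) (e : rel T) (r1 r2 : rel T) : Prop :=
  strict_linear_order r1 /\ strict_linear_order r2 /\
  forall u v, u != v -> (e u v <-> ((r1 u v /\ r2 v u) \/ (r1 v u /\ r2 u v))).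

Definition tclosure (T : finType) (r : rel T) : rel T :=
  fun x y => [exists z, r x z && connect r z y].

Definition pair_T (T : finType) (p : rel T * rel T) : rel T * rel T :=
  (tclosure p.1, tclosure p.2).

Definition pair_E (T : finType) (e : rel T) (p : rel T * rel T) : rel T * rel T :=
  ((fun x y => [|| p.1 x y, e x y && p.2 y x | ~~ e x y && p.2 x y]),
   (fun x y => [|| p.2 x y, e x y && p.1 y x | ~~ e x y && p.1 x y])).

Definition lhd0 (T : finType) (w : T) : rel T * rel T :=
  ((fun x y => (x == w) && (y != w)), (fun _ _ => false)).

Fixpoint lhd_seq (T : finType) (e : rel T) (w : T) (k : nat) : rel T * rel T :=
  match k with
  | 0 => lhd0 w
  | k'.+1 => pair_T (pair_E e (lhd_seq e w k'))
  end.

Definition stabilized_at (T : finType) (e : rel T) (w : T) (m : nat) : Prop :=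
  forall k, m <= k -> forall x y,
    (lhd_seq e w k).1 x y = (lhd_seq e w m).1 x y /\
    (lhd_seq e w k).2 x y = (lhd_seq e w m).2 x y.

(* Main.v *)
Require Import Defs.
From mathcomp Require Import all_boot.
Set Implicit Arguments. Unset Strict Implicit. Unset Printing Implicit Defensive.

Lemma tcl_sub (T : finType) (r : rel T) x y : r x y -> tclosure r x y.
Proof. by move=> H; apply/existsP; exists y; rewrite H connect0. Qed.

Lemma tcl_trans (T : finType) (r : rel T) : transitive (tclosure r).
Proof.
move=> y x z /existsP[a /andP[xa ay]] /existsP[b /andP[yb bz]].
apply/existsP; exists a; rewrite xa /=.
apply: connect_trans ay _; exact: connect_trans (connect1 yb) bz.
Qed.

Lemma tcl_in (T : finType) (r s : rel T) :
  (forall x y, r x y -> s x y) -> transitive s ->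
  forall x y, tclosure r x y -> s x y.
Proof.
move=> rs ts x y /existsP[a /andP[xa /connectP[p pa ->]]].
have {xa}xa := rs _ _ xa.
elim: p a xa pa => [|b p IH] a xa /= pa; first exact: xa.
case/andP: pa => ab pb; apply: IH pb.
exact: (ts a x b xa (rs _ _ ab)).
Qed.

Lemma tcl_ext (T : finType) (r s : rel T) : r =2 s -> tclosure r =2 tclosure s.
Proof.
move=> H x y; rewrite /tclosure; apply: eq_existsb => z.
by rewrite H (eq_connect H).
Qed.

Lemma step_ext (T : finType) (e : rel T) (p q : rel T * rel T) :
  p.1 =2 q.1 -> p.2 =2 q.2 ->
  (pair_T (pair_E e p)).1 =2 (pair_T (pair_E e q)).1 /\
  (pair_T (pair_E e p)).2 =2 (pair_T (pair_E e q)).2.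
Proof.
move=> H1 H2; split; apply: tcl_ext => x y /=; by rewrite !H1 !H2.
Qed.

Lemma lhd_mono1 (T : finType) (e : rel T) w k x y :
  ((lhd_seq e w k).1 x y -> (lhd_seq e w k.+1).1 x y) /\
  ((lhd_seq e w k).2 x y -> (lhd_seq e w k.+1).2 x y).
Proof.
by split => H; apply: tcl_sub; rewrite /= H.
Qed.

Lemma lhd_mono (T : finType) (e : rel T) w j k x y : j <= k ->
  ((lhd_seq e w j).1 x y -> (lhd_seq e w k).1 x y) /\
  ((lhd_seq e w j).2 x y -> (lhd_seq e w k).2 x y).
Proof.
elim: k => [|k IH]; first by rewrite leqn0 => /eqP ->.
rewrite leq_eqVlt => /orP[/eqP -> //|jk].
have [A B] := IH jk; have [C D] := lhd_mono1 e w k x y.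
by split => H; [apply: C; apply: A | apply: D; apply: B].
Qed.

Lemma lhd_exists_stab (T : finType) (e : rel T) w : exists m, stabilized_at e w m.
Proof.
pose P k := lhd_seq e w k.
pose S k := [set p : bool * (T * T) |
   if p.1 then (P k).1 p.2.1 p.2.2 else (P k).2 p.2.1 p.2.2].
have Ssub k : S k \subset S k.+1.
  apply/subsetP => [[[] [x y]]]; rewrite !inE /=;
  by have [A B] := lhd_mono1 e w k x y.
have Hc n : (forall k, k < n -> S k != S k.+1) -> n <= #|S n|.
  elim: n => [//|n IH] H.
  have := IH (fun k kn => H k (ltnW kn)).
  move=> le; apply: leq_ltn_trans le _; apply: proper_card.
  by rewrite properEneq Ssub H.
pose N := #|{: bool * (T * T)}|.+1.
have [/existsP[k /eqP Hk]|nex] := boolP [exists k : 'I_N, S k == S k.+1]; last first.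
  exfalso.
  have HN : forall k, k < N -> S k != S k.+1.
    move=> k kN; apply/negP => /eqP E; move/negP: nex; apply.
    by apply/existsP; exists (Ordinal kN); rewrite /= E.
  have := Hc N HN; rewrite leqNgt => /negP; apply.
  by rewrite ltnS max_card.
have E1 : (P k.+1).1 =2 (P k).1.
  by move=> x y; move/setP: Hk => /(_ (true, (x, y))); rewrite !inE.
have E2 : (P k.+1).2 =2 (P k).2.
  by move=> x y; move/setP: Hk => /(_ (false, (x, y))); rewrite !inE.
have Hd d : (P (k + d)).1 =2 (P k).1 /\ (P (k + d)).2 =2 (P k).2.
  elim: d => [|d [IH1 IH2]]; first by rewrite addn0.
  rewrite addnS; have [F1 F2] := step_ext e IH1 IH2.
  split => x y; rewrite /P /=.
    by have := F1 x y; rewrite /= => ->; rewrite -E1.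
  by have := F2 x y; rewrite /= => ->; rewrite -E2.
exists k => j kj x y; rewrite -(subnKC kj).
by have [A B] := Hd (j - k); rewrite A B.
Qed.

Lemma slo_neg (T : finType) (r : rel T) x y : strict_linear_order r ->
  x != y -> r y x = ~~ r x y.
Proof.
case=> irr [tr tot] xy; case rxy: (r x y) => /=.
  apply/negP => ryx; have := tr _ _ _ rxy ryx; by rewrite irr.
by case: (tot _ _ xy); rewrite ?rxy.
Qed.

Lemma realizer_xor (T : finType) (e r1 r2 : rel T) x y :
  realizer e r1 r2 -> x != y -> e x y = (r1 x y != r2 x y).
Proof.
move=> [s1 [s2 H]] xy; have := H _ _ xy.
rewrite (slo_neg s1 xy) (slo_neg s2 xy).
case: (e x y); case: (r1 x y); case: (r2 x y); move=> /= [L R] //.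
all: try by case: (L isT) => -[].
all: by apply: R; first [by left | by right].
Qed.

Lemma between (T : finType) (r Q : rel T) z a b :
  strict_linear_order r -> transitive Q -> (forall x y, Q x y -> r x y) ->
  z != a -> z != b -> (Q z a || Q a z) -> (Q z b || Q b z) ->
  ~~ (Q a b || Q b a) -> r z a = r z b.
Proof.
move=> sr tQ QR za zb cza czb nab.
have QE x y : x != y -> (Q x y || Q y x) -> Q x y = r x y.
  move=> xy /orP[q|q]; first by rewrite q (QR _ _ q).
  have := QR _ _ q; rewrite (slo_neg sr xy) => /negbTE ->.
  by apply/negP => q'; have := QR _ _ q'; have := QR _ _ q; rewrite (slo_neg sr xy) => /negbTE ->.
have zaE := QE _ _ za cza; have zbE := QE _ _ zb czb.
have az : a != z by rewrite eq_sym.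
have bz : b != z by rewrite eq_sym.
have azE : Q a z = r a z by rewrite (QE _ _ az) // orbC.
have bzE : Q b z = r b z by rewrite (QE _ _ bz) // orbC.
case hza: (r z a); case hzb: (r z b) => //.
  have rbz : r b z by rewrite (slo_neg sr zb) hzb.
  have : Q b a by apply: (tQ z); [rewrite bzE | rewrite zaE].
  by move=> q; move: nab; rewrite q orbT.
have raz : r a z by rewrite (slo_neg sr za) hza.
have : Q a b by apply: (tQ z); [rewrite azE | rewrite zbE].
by move=> q; move: nab; rewrite q.
Qed.

Lemma lhd_contained (T : finType) (e r1 r2 : rel T) w :
  simple_graph e -> realizer e r1 r2 -> (forall v, v != w -> r1 w v) ->
  forall k x y, ((lhd_seq e w k).1 x y -> r1 x y) /\ ((lhd_seq e w k).2 x y -> r2 x y).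
Proof.
move=> [esym eirr] re w1 k; have [s1 [s2 H]] := re.
have [irr1 [tr1 tot1]] := s1; have [irr2 [tr2 tot2]] := s2.
elim: k => [|k IH] x y /=.
  by split => // /andP[/eqP -> yw]; apply: w1.
split; apply: tcl_in => //= a b.
- case/or3P => [|/andP[eab q]|/andP[neab q]]; first by case/(_ a b): IH.
    have rba : r2 b a by case/(_ b a): IH => _; apply.
    have ab : a != b by apply: contraTneq rba => ->; rewrite irr2.
    rewrite (realizer_xor re ab) in eab.
    by move: rba eab; rewrite (slo_neg s2 ab) => /negbTE ->; case: (r1 a b).
  have rab : r2 a b by case/(_ a b): IH => _; apply.
  have ab : a != b by apply: contraTneq rab => ->; rewrite irr2.
  rewrite (realizer_xor re ab) rab in neab.
  by move: neab; case: (r1 a b).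
- case/or3P => [|/andP[eab q]|/andP[neab q]]; first by case/(_ a b): IH.
    have rba : r1 b a by case/(_ b a): IH => + _; apply.
    have ab : a != b by apply: contraTneq rba => ->; rewrite irr1.
    rewrite (realizer_xor re ab) in eab.
    by move: rba eab; rewrite (slo_neg s1 ab) => /negbTE ->; case: (r2 a b).
  have rab : r1 a b by case/(_ a b): IH => + _; apply.
  have ab : a != b by apply: contraTneq rab => ->; rewrite irr1.
  rewrite (realizer_xor re ab) rab in neab.
  by move: neab; case: (r2 a b).
Qed.

Theorem theorem5p6 (T : finType) (e : rel T) (r1 r2 : rel T) (w : T) :
  simple_graph e ->
  prime_graph e ->
  realizer e r1 r2 ->
  (forall v, v != w -> r1 w v) ->
  (exists m, stabilized_at e w m) /\
  (forall m, stabilized_at e w m ->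
     strict_linear_order (lhd_seq e w m).1 /\
     strict_linear_order (lhd_seq e w m).2).
Proof.
move=> sg pg re w1; split; first exact: lhd_exists_stab.
move=> m Hm.
have [esym eirr] := sg.
have [s1 [s2 Hre]] := re.
have [irr1 [tr1 tot1]] := s1; have [irr2 [tr2 tot2]] := s2.
have cont := lhd_contained sg re w1.
set R := lhd_seq e w m.
have fix1 x y : R.1 x y = tclosure (pair_E e R).1 x y.
  by have [A _] := Hm m.+1 (leqnSn m) x y; rewrite -A.
have fix2 x y : R.2 x y = tclosure (pair_E e R).2 x y.
  by have [_ A] := Hm m.+1 (leqnSn m) x y; rewrite -A.
have T1 : transitive R.1.
  by move=> y x z; rewrite (fix1 x y) (fix1 y z) (fix1 x z); apply: tcl_trans.
have T2 : transitive R.2.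
  by move=> y x z; rewrite (fix2 x y) (fix2 y z) (fix2 x z); apply: tcl_trans.
have E1 x y : (pair_E e R).1 x y -> R.1 x y by rewrite fix1; apply: tcl_sub.
have E2 x y : (pair_E e R).2 x y -> R.2 x y by rewrite fix2; apply: tcl_sub.
have C1 x y : R.1 x y -> R.2 x y || R.2 y x.
  move=> h; case exy: (e x y).
    by apply/orP; right; apply: E2; rewrite /= esym exy h orbT.
  by apply/orP; left; apply: E2; rewrite /= exy h !orbT.
have C2 x y : R.2 x y -> R.1 x y || R.1 y x.
  move=> h; case exy: (e x y).
    by apply/orP; right; apply: E1; rewrite /= esym exy h orbT.
  by apply/orP; left; apply: E1; rewrite /= exy h !orbT.
have cE x y : (R.1 x y || R.1 y x) = (R.2 x y || R.2 y x).
  apply/idP/idP => /orP[h|h].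
  - exact: C1.
  - by rewrite orbC; apply: C1.
  - exact: C2.
  - by rewrite orbC; apply: C2.
have R1r x y : R.1 x y -> r1 x y by case: (cont m x y).
have R2r x y : R.2 x y -> r2 x y by case: (cont m x y).
have cw v : v != w -> R.1 w v.
  move=> vw; have [A _] := lhd_mono e w w v (leq0n m); apply: A.
  by rewrite /= eqxx vw.
pose c x y := R.1 x y || R.1 y x.
have tot x y : x != y -> c x y.
  move=> xy; apply: contraT => nc.
  pose I := [rel a b | (a != b) && ~~ c a b].
  pose M := [set v | connect I v x].
  have xM : x \in M by rewrite inE connect0.
  have yM : y \in M.
    by rewrite inE; apply: connect1; rewrite /= eq_sym xy /c orbC.
  have modM : is_module e M.
    split; first by apply/set0Pn; exists x.
    move=> z zM.
    have K a : a \in M -> c z a.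
      move=> aM; apply: contraT => nza.
      have za : z != a by apply: contraNneq zM => ->.
      move: zM; rewrite inE.
      have Iza : I z a by rewrite /= za nza.
      rewrite inE in aM; by rewrite (connect_trans (@connect1 _ I z a Iza) aM).
    have Eq v : connect I v x -> e z v = e z x.
      case/connectP => p pv xl.
      elim: p v pv xl => [|b p IH] v /=; first by move=> _ ->.
      move=> /andP[vb pb] xl.
      rewrite -(IH b pb xl).
      have vM : v \in M.
        by rewrite inE; apply/connectP; exists (b :: p); [exact: (introT andP (conj vb pb)) | by []].
      have bM : b \in M by rewrite inE; apply/connectP; exists p.
      have zv : z != v by apply: contraNneq zM => ->.
      have zb : z != b by apply: contraNneq zM => ->.
      case/andP: vb => nvb ncvb.
      rewrite (realizer_xor re zv) (realizer_xor re zb).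
      rewrite (between s1 T1 R1r zv zb (K _ vM) (K _ bM) ncvb).
      rewrite (between s2 T2 R2r zv zb) //; rewrite -cE; first exact: K.
      - exact: K.
      - exact: ncvb.
    case ezx: (e z x); [left | right] => a aM; rewrite Eq ?ezx //; by rewrite inE in aM.
  case: (pg M modM) => [MT|/eqP/cards1P[a Ma]].
    have : w \in M by rewrite MT inE.
    rewrite inE => /connectP[[|b p] /= pw xw].
      move: nc; rewrite xw /c (cw y) //; by rewrite eq_sym -xw.
    case/andP: pw => /andP[wb]; rewrite /c cw //; by rewrite eq_sym.
  move: xM yM; rewrite Ma !inE => /eqP xa /eqP ya.
  by move: xy; rewrite xa ya eqxx.
split.
  split; first by move=> x; apply/negP => /R1r; rewrite irr1.
  split=> // x y xy; by case/orP: (tot x y xy) => ->; auto.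
split; first by move=> x; apply/negP => /R2r; rewrite irr2.
split=> // x y xy; have := tot x y xy; rewrite /c cE; by case/orP => ->; auto.
Qed.
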